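(* Let $A$ be an implementable allocation rule with interim allocations $x_i$ and interim payments $z_i$. Then for every bidder $i$, the function $b_i^{\mathrm{WPB}}(v_i) := z_i(v_i)/x_i(v_i)$ is monotone non-decreasing on the set $\{v_i \in \mathcal V_i : x_i(v_i) > 0\}$.
   Context: Setting: $n$ risk-neutral unit-demand bidders and $k$ identical items, $1 \le k < n$. Bidder $i$ has private value $v_i \in \mathcal V_i = [0,\bar v_i]$, drawn independently across bidders from a distribution $F_i$ with density $f_i > 0$ on $\mathcal V_i$; $\bm v = (v_1,\dots,v_n)$, $\mathcal V = \prod_i \mathcal V_i$. An allocation rule is a measurable map $A : \mathcal V \to \{0,1\}^n$ with $\sum_i A_i(\bm v) \le k$. Its interim allocation is $x_i(v_i) = \mathbb E[A_i(\bm v) \mid v_i]$, and $A$ is called implementable if every $x_i$ is non-decreasing. Its interim payment function is $z_i(v_i) = v_i x_i(v_i) - \int_0^{v_i} x_i(u)\,du$. *)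

(* Defs.v *)
From HB Require Import structures.
From mathcomp Require Import all_boot all_order all_algebra.
From mathcomp Require Import all_classical all_reals all_analysis.
Set Implicit Arguments. Unset Strict Implicit. Unset Printing Implicit Defensive.
Import Order.TTheory GRing.Theory Num.Theory.
Local Open Scope classical_set_scope.
Local Open Scope ring_scope.

(* Value profiles v = (v_1,...,v_n) are n-tuples of reals (n.-tuple R carries
   the product sigma-algebra in MathComp-Analysis). *)

Definition upd (R : realType) (n : nat) (v : n.-tuple R) (j : 'I_n) (u : R)
  : n.-tuple R := [tuple if i == j then u else tnth v i | i < n].

Definition Vset (R : realType) (n : nat) (vbar : 'I_n -> R) (i : 'I_n) : set R :=
  `[0, vbar i].

(* Expectation of g over the coordinates in S, each v_j (j in S) drawn
   independently from the density f j on [0, vbar j]; the other coordinates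
   are taken from v.  (Iterated Lebesgue integrals.) *)
Fixpoint iexp (R : realType) (n : nat) (f : 'I_n -> R -> R) (vbar : 'I_n -> R)
  (S : seq 'I_n) (g : n.-tuple R -> R) (v : n.-tuple R) : R :=
  match S with
  | [::] => g v
  | j :: S' => Rintegral (@lebesgue_measure R) (Vset vbar j)
                 (fun u => f j u * iexp f vbar S' g (upd v j u))
  end.

(* Interim allocation x_i(v_i) = E[A_i(v) | v_i], i.e. the expectation of
   A_i(v_i, v_{-i}) over the independent v_j, j <> i. *)
Definition interim_alloc (R : realType) (n : nat) (f : 'I_n -> R -> R)
  (vbar : 'I_n -> R) (A : n.-tuple R -> 'I_n -> bool) (i : 'I_n) (vi : R) : R :=
  iexp f vbar [seq j <- enum 'I_n | j != i] (fun v => (A v i)%:R)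
    (upd [tuple (0:R) | _ < n] i vi).

Definition interim_pay (R : realType) (n : nat) (f : 'I_n -> R -> R)
  (vbar : 'I_n -> R) (A : n.-tuple R -> 'I_n -> bool) (i : 'I_n) (vi : R) : R :=
  vi * interim_alloc f vbar A i vi
  - Rintegral (@lebesgue_measure R) `[0, vi] (interim_alloc f vbar A i).

Definition implementable (R : realType) (n : nat) (f : 'I_n -> R -> R)
  (vbar : 'I_n -> R) (A : n.-tuple R -> 'I_n -> bool) : Prop :=
  forall i a b, a \in Vset vbar i -> b \in Vset vbar i -> a <= b ->
    interim_alloc f vbar A i a <= interim_alloc f vbar A i b.

(* Main.v *)
Require Import Defs.
From HB Require Import structures.
From mathcomp Require Import all_boot all_order all_algebra.
From mathcomp Require Import all_classical all_reals all_analysis.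
From mathcomp Require Import lra measurable_realfun.
Import Order.TTheory GRing.Theory Num.Theory.
Local Open Scope classical_set_scope.
Local Open Scope ring_scope.

Lemma iexp_ge0 (R : realType) (n : nat) (f : 'I_n -> R -> R) (vbar : 'I_n -> R)
  (S : seq 'I_n) (g : n.-tuple R -> R) :
  (forall i u, u \in Vset vbar i -> 0 < f i u) -> (forall v, 0 <= g v) ->
  forall v, 0 <= iexp f vbar S g v.
Proof.
move=> fpos gpos; elim: S => [|j S IH] v /=; first exact: gpos.
apply: Rintegral_ge0 => u uV; apply: mulr_ge0; last exact: IH.
by apply/ltW/fpos; rewrite inE.
Qed.

Lemma final (R : realType) (a b Xa Xb Ia Ib : R) :
  0 < Xa -> Xa <= Xb -> 0 <= Ia -> a <= b -> Ib <= Ia + Xb * (b - a) ->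
  (a * Xa - Ia) / Xa <= (b * Xb - Ib) / Xb.
Proof.
move=> Xa0 XaXb Ia0 ab Hb.
have Xb0 : 0 < Xb by apply: lt_le_trans XaXb.
rewrite !mulrBl -!mulrA !divff ?gt_eqF // !mulr1.
set ra := Ia / Xa; set rb := Ib / Xb.
have eA : Ia = ra * Xa by rewrite /ra -mulrA mulVf ?gt_eqF // mulr1.
have eB : Ib = rb * Xb by rewrite /rb -mulrA mulVf ?gt_eqF // mulr1.
have ra0 : 0 <= ra by apply: divr_ge0 => //; apply: ltW.
rewrite eA eB in Hb.
have : rb * Xb <= (ra + (b - a)) * Xb by nra.
rewrite ler_pM2r //; lra.
Qed.

Lemma mainT (R : realType) (X : R -> R) (a b : R) :
  (forall v, 0 <= X v) ->
  (forall u w, 0 <= u -> u <= w -> w <= b -> X u <= X w) ->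
  0 <= a -> a <= b ->
  Rintegral (@lebesgue_measure R) `[0, b] X <=
  Rintegral (@lebesgue_measure R) `[0, a] X + X b * (b - a).
Proof.
move=> X0 mono a0 ab.
pose g u := X (Num.min (Num.max u 0) b).
have b0 : 0 <= b by apply: le_trans ab.
have clamp u : 0 <= u -> u <= b -> Num.min (Num.max u 0) b = u.
  by move=> u0 ub; rewrite (max_idPl u0) (min_idPl ub).
have gnd : nondecreasing_fun g.
  move=> u w uw; rewrite /g; apply: mono.
  - by rewrite le_min le_max lexx orbT.
  - by apply: le_min2 => //; apply: le_max2.
  - by rewrite ge_min lexx orbT.
have gb u : g u <= X b.
  rewrite /g; apply: mono => //; [by rewrite le_min le_max lexx orbT| by rewrite ge_min lexx orbT].
have mg : measurable_fun `[0, b] g by apply: nondecreasing_measurable.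
have ig : (@lebesgue_measure R).-integrable `[0, b] (EFin \o g).
  apply: measurable_bounded_integrable => //.
    by have := lebesgue_measure_itv `[0, b]; rewrite /= => ->; case: ifP => _; rewrite ?ltry.
  rewrite /bounded_near; near=> M => u _ /=; rewrite ger0_norm ?X0 //.
  by apply: le_trans (gb u) _; near: M; apply: nbhs_pinfty_ge; rewrite num_real.
have mu := (@lebesgue_measure R).
have Xg c : 0 <= c -> c <= b ->
    Rintegral (@lebesgue_measure R) `[0, c] X = Rintegral (@lebesgue_measure R) `[0, c] g.
  move=> c0 cb; apply: eq_Rintegral => u; rewrite inE /= in_itv /= => /andP[u0 uc].
  by rewrite /g clamp //; apply: le_trans cb.
rewrite Xg // Xg //.
have split : `[0, b]%classic = `[0, a]%classic `|` `]a, b]%classic :> set R.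
  have := @itv_bndbnd_setU _ R (BLeft 0) (BRight a) (BRight b).
  by rewrite /= !bnd_simp => ->.
have dis : [disjoint `[0, a]%classic & (`]a, b]%classic : set R)].
  apply/disj_setPS => x [] /=; rewrite !in_itv /= => /andP[_ xa] /andP[ax _].
  by move: (lt_le_trans ax xa); rewrite ltxx.
rewrite split Rintegral_setU //; last by rewrite -split.
rewrite lerD2l.
have sub : `]a, b]%classic `<=` (`[0, b]%classic : set R).
  move=> x /=; rewrite !in_itv /= => /andP[ax ->]; rewrite andbT.
  by apply: le_trans (ltW ax).
have ig' : (@lebesgue_measure R).-integrable `]a, b] (EFin \o g) by apply: integrableS ig.
apply: le_trans (_ : Rintegral (@lebesgue_measure R) `]a, b] (fun=> X b) <= _).
  apply: le_Rintegral => //.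
  - apply: measurable_bounded_integrable => //.
      by have := lebesgue_measure_itv `]a, b]; rewrite /= => ->; case: ifP => _; rewrite ?ltry.
    rewrite /bounded_near; near=> M => u _ /=.
    by rewrite ger0_norm ?X0 //; near: M; apply: nbhs_pinfty_ge; rewrite num_real.
  - by move=> x _; apply: gb.
rewrite Rintegral_cst //.
have := lebesgue_measure_itv `]a, b]; rewrite /= => ->.
rewrite lte_fin; case: ltP => ab' /=; first by [].
have -> : b - a = 0 by apply/eqP; rewrite subr_eq0 eq_le ab' ab.
by [].
Unshelve. all: by end_near.
Qed.

Theorem mainTheorem1 (R : realType) (n k : nat)
  (vbar : 'I_n -> R) (f : 'I_n -> R -> R) (A : n.-tuple R -> 'I_n -> bool) :
  (1 <= k < n)%N ->
  (forall i, 0 < vbar i) ->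
  (* f i is a density of F_i, positive on V_i *)
  (forall i, measurable_fun (Vset vbar i) (f i)) ->
  (forall i u, u \in Vset vbar i -> 0 < f i u) ->
  (forall i, (\int[@lebesgue_measure R]_(u in Vset vbar i) (f i u)%:E = 1)%E) ->
  (* A is a measurable allocation rule allocating at most k items *)
  (forall i, measurable [set v : n.-tuple R | A v i]) ->
  (forall v : n.-tuple R, (forall i, tnth v i \in Vset vbar i) ->
     (\sum_(i < n) (A v i : nat) <= k)%N) ->
  implementable f vbar A ->
  forall (i : 'I_n) (a b : R),
    a \in Vset vbar i -> b \in Vset vbar i ->
    0 < interim_alloc f vbar A i a -> 0 < interim_alloc f vbar A i b ->
    a <= b ->
    interim_pay f vbar A i a / interim_alloc f vbar A i a
      <= interim_pay f vbar A i b / interim_alloc f vbar A i b.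
Proof.
move=> _ _ _ fpos _ _ _ impl i a b aV bV Xa0 Xb0 ab.
set X := interim_alloc f vbar A i.
have X0 v : 0 <= X v.
  by apply: iexp_ge0 => // w; rewrite ler0n.
move: (aV) (bV); rewrite !inE /Vset /= !in_itv /= => /andP[a0 _] /andP[b0 bvb].
have mono u w : 0 <= u -> u <= w -> w <= b -> X u <= X w.
  move=> u0 uw wb; apply: impl => //; rewrite inE /Vset /= in_itv /=.
  - by rewrite u0 (le_trans uw) // (le_trans wb).
  - by rewrite (le_trans u0 uw) (le_trans wb).
rewrite /interim_pay -/X.
apply: final => //.
- by apply: mono => //; apply: lexx.
- by apply: Rintegral_ge0 => u _; apply: X0.
- exact: mainT.
Qed.
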